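(* The bipartite graph $G$ has a perfect matching. Moreover, for every maximum-weight perfect matching $M^*$ of $G$, the induced allocation $X$ is a complete allocation of all real items in which every real item is given to an agent that values it positively, and $X$ is Pareto optimal.
   Context: Setting: $n$ agents, $m$ real items $\mathcal M$, restricted additive valuations: there are values $v(g)>0$ with $v_{i,g}\in\{0,v(g)\}$ and $v_i(S)=\sum_{g\in S}v_{i,g}$; every real item is valued positively by at least one agent. Let $u_1>u_2>\dots>u_t$ be the distinct values in $\{v(g):g\in\mathcal M\}$ and $\mathcal M_f=\{g:v(g)=u_f\}$. Add a set $\mathcal M_d$ of $mn-m$ dummy items valued $0$ by all agents. The bipartite graph $G$ has left side $A=\{a_g: g\in\mathcal M\cup\mathcal M_d\}$ ($mn$ vertices) and right side $B=\{b_{(i,c)}: i\in[n], c\in[m]\}$; the set $\mathcal N_c=\{b_{(i,c)}:i\in[n]\}$ is called bucket $c$. Edges: for each real $g\in\mathcal M_f$, each agent $i$ with $v_{i,g}>0$ and each $c\in[m]$, an edge $(a_g,b_{(i,c)})$ of weight $-m^{t-f}\cdot c$; for each dummy $g$ and all $i,c$, an edge $(a_g,b_{(i,c)})$ of weight $0$; no other edges. The allocation induced by a perfect matching $M$ is $X_i=\{g\in\mathcal M: a_g \text{ matched in } M \text{ to some } b_{(i,c)}\}$. An integral allocation $X$ is Pareto optimal if no integral allocation $Y$ has $v_i(Y_i)\ge v_i(X_i)$ for all $i$ with strict inequality for some $i$. *)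

(* Defs.v *)
From HB Require Import structures.
From mathcomp Require Import all_boot all_order all_algebra.
Set Implicit Arguments.
Unset Strict Implicit.
Unset Printing Implicit Defensive.
Import Order.TTheory GRing.Theory Num.Theory.
Local Open Scope ring_scope.

(* Agents are 'I_n, real items are 'I_m.  [v g] is the value v(g) of item g,
   [val i g] is v_{i,g}.  Bucket c in [m] is represented by k : 'I_m with c = k.+1. *)
Section Defs.
Variables (R : realDomainType) (n m : nat) (v : 'I_m -> R) (val : 'I_n -> 'I_m -> R).

(* left side A: real items (inl g) and the m*n - m dummy items (inr d) *)
Definition LeftV := ('I_m + 'I_(m * n - m))%type.
(* right side B: b_(i,c), i agent, c = k.+1 bucket *)
Definition RightV := ('I_n * 'I_m)%type.

(* u_1 > u_2 > ... > u_t : the distinct values, in decreasing order *)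
Definition distinct_vals : seq R :=
  sort (fun x y => y <= x) (undup [seq v g | g <- enum 'I_m]).
Definition tval : nat := size distinct_vals.
(* f such that v(g) = u_f (1-indexed) *)
Definition fidx (g : 'I_m) : nat := (index (v g) distinct_vals).+1.

Definition edge (a : LeftV) (b : RightV) : bool :=
  match a with
  | inl g => 0 < val b.1 g
  | inr _ => true
  end.

Definition weight (a : LeftV) (b : RightV) : int :=
  match a with
  | inl g => - ((m ^ (tval - fidx g) * (b.2 : nat).+1)%N)%:Z
  | inr _ => 0
  end.

Definition is_perfect_matching (M : {set LeftV * RightV}) : Prop :=
  [/\ forall e, e \in M -> edge e.1 e.2,
      forall a : LeftV, #|[set b | (a, b) \in M]| = 1%N
    & forall b : RightV, #|[set a | (a, b) \in M]| = 1%N].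

Definition mweight (M : {set LeftV * RightV}) : int := \sum_(e in M) weight e.1 e.2.

Definition is_max_weight_pm (M : {set LeftV * RightV}) : Prop :=
  is_perfect_matching M /\
  forall M', is_perfect_matching M' -> mweight M' <= mweight M.

Definition induced (M : {set LeftV * RightV}) (i : 'I_n) : {set 'I_m} :=
  [set g | [exists k : 'I_m, ((inl g : LeftV), (i, k)) \in M]].

Definition bundle_val (i : 'I_n) (S : {set 'I_m}) : R := \sum_(g in S) val i g.

Definition is_allocation (X : 'I_n -> {set 'I_m}) : Prop :=
  forall i j, i != j -> [disjoint X i & X j].

Definition is_complete (X : 'I_n -> {set 'I_m}) : Prop :=
  forall g, exists i, g \in X i.

Definition pareto_optimal (X : 'I_n -> {set 'I_m}) : Prop :=
  is_allocation X /\
  ~ (exists Y : 'I_n -> {set 'I_m}, is_allocation Y /\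
       (forall i, bundle_val i (X i) <= bundle_val i (Y i)) /\
       (exists i, bundle_val i (X i) < bundle_val i (Y i))).

End Defs.

(* Main.v *)
Require Import Defs.
From HB Require Import structures.
From mathcomp Require Import all_boot all_order all_algebra.
Import Order.TTheory GRing.Theory Num.Theory.
Local Open Scope ring_scope.

Section Pf.
Variables (R : realDomainType) (n m : nat) (v : 'I_m -> R) (val : 'I_n -> 'I_m -> R).
Hypothesis vpos : forall g, 0 < v g.
Hypothesis val01 : forall i g, val i g = 0 \/ val i g = v g.

Lemma val_ge0 i g : 0 <= val i g.
Proof. by case: (val01 i g) => ->; [|apply: ltW]. Qed.

Lemma val_le i g : val i g <= v g.
Proof. by case: (val01 i g) => ->; [apply: ltW|]. Qed.

Lemma sumY (Y : 'I_n -> {set 'I_m}) :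
  \sum_i bundle_val val i (Y i) = \sum_g \sum_(i | g \in Y i) val i g.
Proof.
rewrite /bundle_val.
rewrite (eq_bigr (fun i => \sum_g (if g \in Y i then val i g else 0))); last first.
  by move=> i _; rewrite big_mkcond.
rewrite exchange_big /=.
by apply: eq_bigr => g _; rewrite [RHS]big_mkcond.
Qed.

Lemma sum_le (Y : 'I_n -> {set 'I_m}) : is_allocation Y ->
  forall g, \sum_(i | g \in Y i) val i g <= v g.
Proof.
move=> HY g.
case: (pickP (fun i => g \in Y i)) => [i0 Hi0|H0].
  rewrite (bigD1 i0) //= big1 ?addr0 ?val_le // => j /andP [Hj Hj0].
  by rewrite (disjointFr (HY _ _ Hj0) Hj) in Hi0.
by rewrite big_pred0 // ltW.
Qed.

Lemma pm_props M : is_perfect_matching val M ->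
  [/\ @is_complete n m (@induced n m M), @is_allocation n m (@induced n m M),
         (forall i g, g \in @induced n m M i -> 0 < val i g)
       & pareto_optimal val (@induced n m M)].
Proof.
case=> Hedge HA HB.
have Hcomp : @is_complete n m (@induced n m M).
  move=> g; have := HA (inl g); move/eqP/cards1P => [[i k] Hs].
  exists i; rewrite inE; apply/existsP; exists k.
  have : (i, k) \in [set (i, k)] by rewrite inE.
  by rewrite -Hs inE.
have Hpos : forall i g, g \in @induced n m M i -> 0 < val i g.
  move=> i g; rewrite inE => /existsP [k Hk]; exact: (Hedge _ Hk).
have Hall : @is_allocation n m (@induced n m M).
  move=> i j Hij; rewrite disjoint_subset; apply/subsetP => g; rewrite !inE.
  move=> /existsP [k Hk]; apply/negP => /existsP [k' Hk'].
  have := HA (inl g); move/eqP/cards1P => [b Hs].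
  have : (i, k) \in [set b0 | (inl g, b0) \in M] by rewrite inE.
  have : (j, k') \in [set b0 | (inl g, b0) \in M] by rewrite inE.
  rewrite Hs !inE => /eqP E1 /eqP E2.
  by move: Hij; rewrite -E1 in E2; case: E2 => ->; rewrite eqxx.
split=> //; split=> //.
move=> [Y [HY [Hle [i0 Hlt]]]].
set X := @induced n m M.
have H1 : \sum_i bundle_val val i (X i) < \sum_i bundle_val val i (Y i).
  rewrite (bigD1 i0) //= [X in _ < X](bigD1 i0) //=.
  by apply: ltr_leD => //; apply: ler_sum => i _.
have H2 : \sum_i bundle_val val i (Y i) <= \sum_i bundle_val val i (X i).
  rewrite !sumY; apply: ler_sum => g _.
  apply: le_trans (@sum_le Y HY g) _.
  have [i Hi] := Hcomp g.
  rewrite (bigD1 i) //=.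
  have -> : val i g = v g by case: (val01 i g) => // E; have := Hpos _ _ Hi; rewrite E ltxx.
  rewrite lerDl; apply: sumr_ge0 => j _; exact: val_ge0.
by move: (lt_le_trans H1 H2); rewrite ltxx.
Qed.

Hypothesis hex : forall g, exists i, 0 < val i g.

Definition ag (g : 'I_m) : 'I_n := xchoose (hex g).
Definition Uset : {set RightV n m} := [set b | b.1 != ag b.2].

Lemma cardU : #|Uset| = (m * n - m)%N.
Proof.
have HC : ~: Uset = [set (ag k, k) | k : 'I_m].
  apply/setP => b; rewrite !inE negbK; apply/eqP/imsetP.
    by move=> E; exists b.2 => //; case: b E => /= x y ->.
  by case=> k _ ->.
have Hinj : injective (fun k : 'I_m => (ag k, k)) by move=> x y [].
have := cardsC Uset; rewrite HC card_imset // card_prod !card_ord => E.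
by rewrite mulnC -E addnK.
Qed.

Definition dm (d : 'I_(m * n - m)) : RightV n m := enum_val (cast_ord (esym cardU) d).

Definition partner (a : LeftV n m) : RightV n m :=
  match a with inl g => (ag g, g) | inr d => dm d end.

Definition Mpm : {set LeftV n m * RightV n m} := [set e | e.2 == partner e.1].

Lemma dm_in d : dm d \in Uset.
Proof. exact: enum_valP. Qed.

Lemma partner_inj : injective partner.
Proof.
case=> [g|d] [g'|d'] /=.
- by case=> _ ->.
- move=> E; have := dm_in d'; rewrite -E inE /= eqxx //.
- move=> E; have := dm_in d; rewrite E inE /= eqxx //.
- by move/enum_val_inj/cast_ord_inj => ->.
Qed.

Lemma partner_surj b : exists a, partner a = b.
Proof.
case: (boolP (b \in Uset)) => Hb.
  exists (inr (cast_ord cardU (enum_rank_in Hb b))).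
  by rewrite /= /dm cast_ordK enum_rankK_in.
exists (inl b.2); move: Hb; rewrite inE negbK => /eqP E.
by rewrite /= -E; case: b {E}.
Qed.

Lemma Mpm_pm : is_perfect_matching val Mpm.
Proof.
split.
- move=> e; rewrite inE => /eqP ->; case: e.1 => [g|d] //=.
  exact: (xchooseP (hex g)).
- move=> a; have -> : [set b | (a, b) \in Mpm] = [set partner a].
    by apply/setP => b; rewrite !inE.
  exact: cards1.
- move=> b; have [a0 Ha0] := partner_surj b.
  have -> : [set a | (a, b) \in Mpm] = [set a0].
    apply/setP => a; rewrite !inE /= -Ha0; apply/eqP/eqP.
      by move/esym/partner_inj.
    by move=> ->.
  exact: cards1.
Qed.

End Pf.

Theorem mainTheorem8 (R : realDomainType) (n m : nat) (v : 'I_m -> R)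
    (val : 'I_n -> 'I_m -> R) :
  (forall g, 0 < v g) ->
  (forall i g, val i g = 0 \/ val i g = v g) ->
  (forall g, exists i, 0 < val i g) ->
  (exists M, @is_perfect_matching R n m val M) /\
  (forall M, @is_max_weight_pm R n m v val M ->
     [/\ @is_complete n m (@induced n m M), @is_allocation n m (@induced n m M),
         (forall i g, g \in @induced n m M i -> 0 < val i g)
       & @pareto_optimal R n m val (@induced n m M)]).
Proof.
move=> H1 H2 H3; split.
  by exists (@Mpm R n m val H3); exact: Mpm_pm.
by move=> M [HM _]; exact: (@pm_props R n m v val H1 H2).
Qed.
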